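(* Let $O=\langle B,E,F,\mathsf c\rangle$ be an occurrence net and let $\mathcal C(O)=\langle S,E,F',I,\emptyset,\mathsf m,\ell\rangle$ be the associated net, where $S=\{(\ast,e)\mid e\in E\}\cup\{(e,\ast)\mid e\in E\}\cup\{\{e,e'\}\mid e\ \#\ e'\}$, $F'=\{((\ast,e),e)\mid e\in E\}\cup\{(s,e)\mid s=\{e,e'\}\in S\}\cup\{(e,(e,\ast))\mid e\in E\}$, $I=\{((\ast,e'),e)\mid e'<_O e\}$, $\mathsf m(s)=0$ if $s=(e,\ast)$ and $\mathsf m(s)=1$ otherwise, and $\ell$ is the identity. Then $\mathcal C(O)$ is an occurrence causal net.
   Context: Occurrence nets: a net $\langle S,T,F,\mathsf m\rangle$ has disjoint places/transitions, flow $F$, initial marking $\mathsf m$; ${}^\bullet x,x^\bullet$ pre/postsets; $t$ enabled at $m$ if ${}^\bullet t\subseteq m$, firing gives $m-{}^\bullet t+t^\bullet$. $<_N$ is the transitive closure of $F$, $\le_N$ its reflexive closure; acyclic means $\le_N$ is a partial order; safe means at most one token per place in reachable markings. An occurrence net $O=\langle B,E,F,\mathsf c\rangle$ is an acyclic safe net with: ${}^\bullet b$ empty or a singleton, ${}^\bullet b=\emptyset$ for $b\in\mathsf c$; each $b$ has some $b'\in\mathsf c$ with $b'\le_O b$; $\{e'\mid e'\le_O e\}$ finite; and $\#$ (with $e\ \#_0\ e'$ iff $e\neq e'$ and ${}^\bullet e\cap{}^\bullet e'\neq\emptyset$; $x\ \#\ x'$ iff $y\ \#_0\ y'$ for some $y\le_O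 x$, $y'\le_O x'$) irreflexive. Contextual/causal nets: a labelled contextual net $N=\langle S,T,F,I,R,\mathsf m,\ell\rangle$ has inhibitor arcs $I\subseteq S\times T$, read arcs $R\subseteq S\times T$, labelling $\ell:T\to L$; ${}^\circ t=\{s\mid(s,t)\in I\}$, $\underline t=\{s\mid(s,t)\in R\}$; every transition has nonempty preset; $t$ enabled at $m$ if ${}^\bullet t+\underline t\subseteq m$ and $m(s)=0$ for $s\in{}^\circ t$; firing gives $m-{}^\bullet t+t^\bullet$. States are multisets of transitions of finite firing sequences from $\mathsf m$, $\lfloor X\rfloor$ the support. Nets are assumed safe. $t\prec_N t'$ iff ${}^\bullet t\cap{}^\circ t'\neq\emptyset$ or $t^\bullet\cap\underline{t'}\neq\emptyset$; $t\ \#_N\ t'$ iff no state contains both in its support. Pre-causal: (1) $<_N\cap(T\times T)=\emptyset$, ${}^\bullet t\cap{}^\circ t=\emptyset$, $t^\bullet\cap\underline t=\emptyset$; (2) $|\ell(s^\bullet)|=1$ for $s\in{}^\circ t$; (3) $t\prec_N t'\Rightarrow$ not $t'\prec_N t$; (4) ${}^\circ t\cup\underline t$ finite; (5) $t\ \#_N\ t'\Rightarrow {}^\bullet t\cap{}^\bullet t'\neq\emptyset$; (6) $t\neq t'$, $\ell(t)=\ell(t')\Rightarrow t\ \#_N\ t'$. Causal net: pre-causal and (a) $\prec^*$ restricted to the support of each state is a partial order, (b) every transition is in the support of some state. An occurrence causal net is a causal net $K$ with $R=\emptyset$, $\ell$ injective, $\prec_K^{*}$ a partial order on all of $T$, and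 such that $t\ \#_K\ t'$ and $t'\prec_K^{*}t''$ imply $t\ \#_K\ t''$. *)

(* Defs.v *)
From Stdlib Require Import List Relations ClassicalDescription.
Import ListNotations.

Definition ind (P : Prop) : nat := if excluded_middle_informative P then 1 else 0.

Definition mcount {T : Type} (s : list T) (t : T) : nat :=
  fold_right (fun u n => ind (u = t) + n) 0 s.

Definition po_on {A : Type} (D : A -> Prop) (r : A -> A -> Prop) : Prop :=
  (forall x, D x -> r x x) /\
  (forall x y z, D x -> D y -> D z -> r x y -> r y z -> r x z) /\
  (forall x y, D x -> D y -> r x y -> r y x -> x = y).

Definition enabled {S T : Type} (pre inh read : S -> T -> Prop)
  (m : S -> nat) (t : T) : Prop :=
  (forall s, ind (pre s t) + ind (read s t) <= m s) /\
  (forall s, inh s t -> m s = 0).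

Definition fire {S T : Type} (pre : S -> T -> Prop) (post : T -> S -> Prop)
  (m : S -> nat) (t : T) : S -> nat :=
  fun s => m s - ind (pre s t) + ind (post t s).

Fixpoint fires {S T : Type} (pre : S -> T -> Prop) (post : T -> S -> Prop)
  (inh read : S -> T -> Prop) (m : S -> nat) (sigma : list T) (m' : S -> nat)
  : Prop :=
  match sigma with
  | [] => m' = m
  | t :: sigma' => enabled pre inh read m t /\
                   fires pre post inh read (fire pre post m t) sigma' m'
  end.

Record cnet := {
  cS : Type; cT : Type;
  cpre : cS -> cT -> Prop;    (* F restricted to S x T *)
  cpost : cT -> cS -> Prop;   (* F restricted to T x S *)
  cinh : cS -> cT -> Prop;
  cread : cS -> cT -> Prop;
  cm : cS -> nat;
  cL : Type;
  clab : cT -> cL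
}.

Definition cfires (N : cnet) := fires (cpre N) (cpost N) (cinh N) (cread N).

Definition cn_safe (N : cnet) : Prop :=
  forall sigma m, cfires N (cm N) sigma m -> forall s, m s <= 1.

Definition cn_wf (N : cnet) : Prop :=
  cn_safe N /\ forall t, exists s, cpre N s t.

Definition is_state (N : cnet) (X : cT N -> nat) : Prop :=
  exists sigma m, cfires N (cm N) sigma m /\ forall t, X t = mcount sigma t.

Definition supp {T : Type} (X : T -> nat) (t : T) : Prop := 0 < X t.

Definition cflow (N : cnet) (x y : cS N + cT N) : Prop :=
  match x, y with
  | inl s, inr t => cpre N s t
  | inr t, inl s => cpost N t s
  | _, _ => False
  end.

Definition clt (N : cnet) := clos_trans _ (cflow N).

Definition cprec (N : cnet) (t t' : cT N) : Prop :=
  (exists s, cpre N s t /\ cinh N s t') \/ (exists s, cpost N t s /\ cread N s t').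

Definition cprec_star (N : cnet) := clos_refl_trans _ (cprec N).

Definition cconf (N : cnet) (t t' : cT N) : Prop :=
  ~ exists X, is_state N X /\ supp X t /\ supp X t'.

Definition precausal (N : cnet) : Prop :=
  cn_wf N /\
  (forall t t', ~ clt N (inr t) (inr t')) /\
  (forall t, ~ exists s, cpre N s t /\ cinh N s t) /\
  (forall t, ~ exists s, cpost N t s /\ cread N s t) /\
  (* (2) |l(s^bullet)| = 1 for inhibitor places s of t *)
  (forall s t, cinh N s t ->
     exists l, (exists t', cpre N s t') /\ (forall t', cpre N s t' -> clab N t' = l)) /\
  (forall t t', cprec N t t' -> ~ cprec N t' t) /\
  (forall t, exists ls : list (cS N), forall s, cinh N s t \/ cread N s t -> In s ls) /\
  (forall t t', cconf N t t' -> exists s, cpre N s t /\ cpre N s t') /\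
  (forall t t', t <> t' -> clab N t = clab N t' -> cconf N t t').

Definition causal_net (N : cnet) : Prop :=
  precausal N /\
  (forall X, is_state N X -> po_on (supp X) (cprec_star N)) /\
  (forall t, exists X, is_state N X /\ supp X t).

Definition occurrence_causal_net (N : cnet) : Prop :=
  causal_net N /\
  (forall s t, ~ cread N s t) /\
  (forall t t', clab N t = clab N t' -> t = t') /\
  po_on (fun _ => True) (cprec_star N) /\
  (forall t t' t'', cconf N t t' -> cprec_star N t' t'' -> cconf N t t'').

Record pnet := {
  pS : Type; pT : Type;
  ppre : pS -> pT -> Prop;
  ppost : pT -> pS -> Prop;
  pm : pS -> nat
}.

Definition noarc {S T : Type} : S -> T -> Prop := fun _ _ => False.

Definition pflow (N : pnet) (x y : pS N + pT N) : Prop :=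
  match x, y with
  | inl s, inr t => ppre N s t
  | inr t, inl s => ppost N t s
  | _, _ => False
  end.

Definition plt (N : pnet) := clos_trans _ (pflow N).
Definition ple (N : pnet) := clos_refl_trans _ (pflow N).

Definition pn_safe (N : pnet) : Prop :=
  forall sigma m, fires (ppre N) (ppost N) noarc noarc (pm N) sigma m ->
  forall s, m s <= 1.

Definition conf0 (N : pnet) (e e' : pT N) : Prop :=
  e <> e' /\ exists b, ppre N b e /\ ppre N b e'.

Definition pconf (N : pnet) (x x' : pS N + pT N) : Prop :=
  exists y y', ple N (inr y) x /\ ple N (inr y') x' /\ conf0 N y y'.

Definition occurrence_net (N : pnet) : Prop :=
  po_on (fun _ => True) (ple N) /\
  pn_safe N /\
  (forall b e e', ppost N e b -> ppost N e' b -> e = e') /\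
  (forall b, 0 < pm N b -> forall e, ~ ppost N e b) /\
  (forall b, exists b', 0 < pm N b' /\ ple N (inl b') (inl b)) /\
  (forall e, exists l : list (pT N), forall e', ple N (inr e') (inr e) -> In e' l) /\
  (forall x, ~ pconf N x x).

Inductive cplace (E : Type) : Type :=
| PIn (e : E)            (* ( *, e ) *)
| POut (e : E)           (* ( e, * ) *)
| PConf (X : E -> Prop). (* { e, e' } as a subset of E *)
Arguments PIn {E}. Arguments POut {E}. Arguments PConf {E}.

Definition cplace_ok (O : pnet) (p : cplace (pT O)) : Prop :=
  match p with
  | PConf X => exists e e', pconf O (inr e) (inr e') /\ X = (fun x => x = e \/ x = e')
  | _ => True
  end.

Definition CPlace (O : pnet) : Type := { p : cplace (pT O) | cplace_ok O p }.

Definition C_pre (O : pnet) (s : CPlace O) (e : pT O) : Prop :=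
  match proj1_sig s with
  | PIn e0 => e0 = e
  | PConf X => X e
  | POut _ => False
  end.

Definition C_post (O : pnet) (e : pT O) (s : CPlace O) : Prop :=
  match proj1_sig s with
  | POut e0 => e0 = e
  | _ => False
  end.

Definition C_inh (O : pnet) (s : CPlace O) (e : pT O) : Prop :=
  match proj1_sig s with
  | PIn e' => plt O (inr e') (inr e)
  | _ => False
  end.

Definition C_m (O : pnet) (s : CPlace O) : nat :=
  match proj1_sig s with
  | POut _ => 0
  | _ => 1
  end.

Definition C_of (O : pnet) : cnet :=
  {| cS := CPlace O; cT := pT O;
     cpre := C_pre O; cpost := C_post O; cinh := C_inh O;
     cread := fun _ _ => False;
     cm := C_m O; cL := pT O; clab := fun e => e |}.

(* Main.v *)
Require Import Defs.
From Stdlib Require Import List Relations ClassicalDescription Classical FunctionalExtensionality Lia.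
Import ListNotations.

Lemma ind_T (P : Prop) : P -> ind P = 1.
Proof. intro H; unfold ind; destruct excluded_middle_informative; tauto. Qed.
Lemma ind_F (P : Prop) : ~ P -> ind P = 0.
Proof. intro H; unfold ind; destruct excluded_middle_informative; tauto. Qed.

Definition bP (P : Prop) : bool := if excluded_middle_informative P then true else false.

Definition Mk (O : pnet) (p : list (pT O)) (s : CPlace O) : nat :=
  match proj1_sig s with
  | PIn e => if excluded_middle_informative (In e p) then 0 else 1
  | POut e => if excluded_middle_informative (In e p) then 1 else 0
  | PConf X => if excluded_middle_informative (exists x, In x p /\ X x) then 0 else 1
  end.

Definition pIn (O : pnet) (e : pT O) : CPlace O := exist (cplace_ok O) (PIn e) I.

Lemma Mk_le1 O p s : Mk O p s <= 1.
Proof. unfold Mk; destruct s as [[e|e|X] H]; simpl; repeat destruct excluded_middle_informative; lia. Qed.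

Lemma Mk_nil O : Mk O [] = C_m O.
Proof.
  apply functional_extensionality; intros [[e|e|X] H]; unfold Mk, C_m; simpl;
  repeat destruct excluded_middle_informative; firstorder.
Qed.

Lemma fire_Mk O p e :
  enabled (C_pre O) (C_inh O) (fun _ _ => False) (Mk O p) e ->
  fire (C_pre O) (C_post O) (Mk O p) e = Mk O (p ++ [e]).
Proof.
  intros [Hpre _].
  assert (He : ~ In e p).
  { specialize (Hpre (pIn O e)). unfold C_pre, Mk, pIn in Hpre; simpl in Hpre.
    rewrite ind_T in Hpre by reflexivity. rewrite ind_F in Hpre by tauto.
    destruct excluded_middle_informative; [lia|auto]. }
  apply functional_extensionality; intros s.
  specialize (Hpre s). unfold fire.
  destruct s as [[e0|e0|X] H]; unfold C_pre, C_post, Mk in *; simpl in *;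
  rewrite (ind_F False) in * by tauto.
  - destruct (classic (e0 = e)) as [->|Hn].
    + rewrite ind_T by auto. repeat destruct excluded_middle_informative;
      try rewrite in_app_iff in *; simpl in *; try tauto; lia.
    + rewrite ind_F by auto. repeat destruct excluded_middle_informative;
      try rewrite in_app_iff in *; simpl in *; try lia; firstorder congruence.
  - destruct (classic (e0 = e)) as [->|Hn].
    + rewrite ind_T by auto. repeat destruct excluded_middle_informative;
      try rewrite in_app_iff in *; simpl in *; try tauto; lia.
    + rewrite ind_F by auto. repeat destruct excluded_middle_informative;
      try rewrite in_app_iff in *; simpl in *; try lia; firstorder congruence.
  - destruct (classic (X e)) as [Hx|Hn].
    + rewrite ind_T in * by auto. repeat destruct excluded_middle_informative; try lia.
      exfalso; match goal with n : ~ _ |- _ => apply n end; exists e; rewrite in_app_iff; simpl; tauto.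
    + rewrite ind_F in * by auto. repeat destruct excluded_middle_informative; try lia.
      * exfalso; destruct e0 as [x [Hx1 Hx2]]; apply n; exists x; rewrite in_app_iff; tauto.
      * exfalso; destruct e0 as [x [Hx1 Hx2]]; apply n; exists x; rewrite in_app_iff in Hx1; simpl in Hx1;
        destruct Hx1 as [?|[->|[]]]; tauto.
Qed.

Fixpoint fseq (O : pnet) (p : list (pT O)) (sigma : list (pT O)) : Prop :=
  match sigma with
  | [] => True
  | e :: s => enabled (C_pre O) (C_inh O) (fun _ _ => False) (Mk O p) e /\ fseq O (p ++ [e]) s
  end.

Lemma fires_Mk O sigma : forall p m,
  fires (C_pre O) (C_post O) (C_inh O) (fun _ _ => False) (Mk O p) sigma m ->
  fseq O p sigma /\ m = Mk O (p ++ sigma).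
Proof.
  induction sigma as [|e s IH]; simpl; intros p m H.
  - rewrite app_nil_r; auto.
  - destruct H as [Hen Hf]. rewrite fire_Mk in Hf by auto.
    apply IH in Hf. rewrite <- app_assoc in Hf. simpl in Hf. tauto.
Qed.

Lemma Mk_fires O sigma : forall p, fseq O p sigma ->
  fires (C_pre O) (C_post O) (C_inh O) (fun _ _ => False) (Mk O p) sigma (Mk O (p ++ sigma)).
Proof.
  induction sigma as [|e s IH]; simpl; intros p H.
  - rewrite app_nil_r; auto.
  - destruct H as [Hen Hf]. split; auto. rewrite fire_Mk by auto.
    replace (p ++ e :: s) with ((p ++ [e]) ++ s) by (rewrite <- app_assoc; reflexivity). auto.
Qed.

Definition Good (O : pnet) (l : list (pT O)) : Prop :=
  NoDup l /\
  (forall a e b, l = a ++ e :: b -> forall y, plt O (inr y) (inr e) -> In y a) /\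
  (forall x y, In x l -> In y l -> ~ pconf O (inr x) (inr y)).

Lemma split_snoc {A : Type} (a b p : list A) (e0 e : A) :
  a ++ e0 :: b = p ++ [e] ->
  (a = p /\ e0 = e /\ b = []) \/ (exists b', b = b' ++ [e] /\ p = a ++ e0 :: b').
Proof.
  intro H. destruct (exists_last (l := e0 :: b) ltac:(discriminate)) as [l' [z Hz]].
  destruct b as [|b1 b] .
  - left. replace (a ++ [e0]) with (a ++ [e0]) in H by reflexivity.
    apply app_inj_tail in H. tauto.
  - right. destruct (exists_last (l := b1 :: b) ltac:(discriminate)) as [b' [z' Hz']].
    rewrite Hz' in H. replace (a ++ e0 :: b' ++ [z']) with ((a ++ e0 :: b') ++ [z']) in H
      by (rewrite <- app_assoc; reflexivity).
    apply app_inj_tail in H. destruct H as [H1 H2]. subst. exists b'. auto.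
Qed.

Lemma Good_prefix O l1 l2 : Good O (l1 ++ l2) -> Good O l1.
Proof.
  intros [H1 [H2 H3]]. split; [|split].
  - eapply NoDup_app_remove_r; eauto.
  - intros a e b -> y Hy. apply (H2 a e (b ++ l2)); auto. rewrite <- app_assoc; reflexivity.
  - intros x y Hx Hy. apply H3; apply in_or_app; auto.
Qed.

Lemma Good_nil O : Good O [].
Proof.
  split; [constructor|split].
  - intros a e b H. destruct a; discriminate.
  - intros x y [].
Qed.

Lemma ct_rt {A} (R : A -> A -> Prop) x y : clos_trans A R x y -> clos_refl_trans A R x y.
Proof. induction 1; eauto using rt_step, rt_trans. Qed.

Lemma plt_irr O : occurrence_net O -> forall e, ~ plt O (inr e) (inr e).
Proof.
  intros [[_ [_ Hanti]] _] e H.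
  apply clos_trans_t1n in H. inversion H; subst.
  - simpl in H0. destruct H0.
  - assert (Hx : ple O y (inr e)) by (apply ct_rt, clos_t1n_trans; auto).
    assert (Hy : ple O (inr e) y) by (apply rt_step; auto).
    specialize (Hanti _ _ I I Hy Hx). subst. simpl in H0. exact H0.
Qed.

Lemma plt_ple O x y : plt O x y -> ple O x y.
Proof. apply ct_rt. Qed.

Lemma pconf_sym O x y : pconf O x y -> pconf O y x.
Proof.
  intros [a [b [H1 [H2 [Hn [c [Hc1 Hc2]]]]]]].
  exists b, a. repeat split; auto. exists c; auto.
Qed.

Lemma pconf_her O x y x' y' : pconf O (inr x) (inr y) -> ple O (inr x) (inr x') ->
  ple O (inr y) (inr y') -> pconf O (inr x') (inr y').
Proof.
  intros [a [b [H1 [H2 H3]]]] Hx Hy. exists a, b. unfold ple in *. split; [|split]; eauto using rt_trans.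
Qed.

Lemma pconf_irr O : occurrence_net O -> forall e, ~ pconf O (inr e) (inr e).
Proof. intros Ho e. apply Ho. Qed.

Definition onet_irr := plt_irr.

Definition pConf O x y (H : pconf O (inr x) (inr y)) : CPlace O :=
  exist (cplace_ok O) (PConf (fun z => z = x \/ z = y)) (ex_intro _ x (ex_intro _ y (conj H eq_refl))).

Lemma en_notin O p e :
  enabled (C_pre O) (C_inh O) (fun _ _ => False) (Mk O p) e -> ~ In e p.
Proof.
  intros [Hpre _]. specialize (Hpre (pIn O e)). unfold C_pre, Mk, pIn in Hpre; simpl in Hpre.
  rewrite ind_T in Hpre by reflexivity. rewrite ind_F in Hpre by tauto.
  destruct excluded_middle_informative; [lia|auto].
Qed.

Lemma good_step O p e : occurrence_net O -> Good O p ->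
  enabled (C_pre O) (C_inh O) (fun _ _ => False) (Mk O p) e -> Good O (p ++ [e]).
Proof.
  intros Ho [G1 [G2 G3]] Hen. pose proof (en_notin _ _ _ Hen) as Hn.
  destruct Hen as [Hpre Hinh]. split; [|split].
  - apply NoDup_app; auto. constructor; auto. constructor.
    intros a Ha [->|[]]; auto.
  - intros a e0 b Hs y Hy. symmetry in Hs; apply split_snoc in Hs. destruct Hs as [[-> [-> ->]]|[b' [-> ->]]].
    + specialize (Hinh (pIn O y) Hy). unfold Mk, pIn in Hinh; simpl in Hinh.
      destruct excluded_middle_informative; [auto|discriminate].
    + eapply G2; eauto.
  - assert (Hk : forall x, In x p -> ~ pconf O (inr x) (inr e)).
    { intros x Hx Hc. specialize (Hpre (pConf O x e Hc)). unfold C_pre, Mk, pConf in Hpre; simpl in Hpre.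
      rewrite ind_T in Hpre by auto. rewrite ind_F in Hpre by tauto.
      destruct excluded_middle_informative as [_|n]; [lia|]. apply n; exists x; auto. }
    intros x y Hx Hy. rewrite in_app_iff in Hx, Hy. simpl in Hx, Hy.
    destruct Hx as [Hx|[<-|[]]]; destruct Hy as [Hy|[<-|[]]].
    + auto.
    + exact (Hk x Hx).
    + intro Hc; apply pconf_sym in Hc; exact (Hk y Hy Hc).
    + apply pconf_irr; auto.
Qed.

Lemma good_enabled O p e : occurrence_net O -> Good O (p ++ [e]) ->
  enabled (C_pre O) (C_inh O) (fun _ _ => False) (Mk O p) e.
Proof.
  intros Ho [G1 [G2 G3]].
  assert (Hn : ~ In e p) by (intro H; apply (NoDup_remove_2 p [] e G1); rewrite app_nil_r; auto).
  split.
  - intros [[e0|e0|X] H]; unfold C_pre, Mk; simpl; rewrite (ind_F False) by tauto.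
    + destruct (classic (e0 = e)) as [->|n].
      * rewrite ind_T by auto. destruct excluded_middle_informative; [tauto|lia].
      * rewrite ind_F by auto. lia.
    + lia.
    + destruct (classic (X e)) as [Hx|n]; [|rewrite ind_F by auto; lia].
      rewrite ind_T by auto. destruct excluded_middle_informative as [[x [Hxp HXx]]|]; [|lia].
      exfalso. destruct H as [x1 [x2 [Hc ->]]].
      assert (Hxl : In x (p ++ [e])) by (apply in_or_app; auto).
      assert (Hel : In e (p ++ [e])) by (apply in_or_app; simpl; auto).
      destruct Hx as [ -> | -> ]; destruct HXx as [ -> | -> ]; try tauto.
      * apply (G3 x1 x2); auto.
      * apply (G3 x1 x2); auto.
  - intros [[e0|e0|X] H]; unfold C_inh, Mk; simpl; try tauto.
    intro Hy. destruct excluded_middle_informative; auto. exfalso; apply n.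
    eapply G2; eauto.
Qed.

Lemma good_fseq O sigma : occurrence_net O -> forall p, Good O (p ++ sigma) -> fseq O p sigma.
Proof.
  intro Ho. induction sigma as [|e s IH]; simpl; intros p Hg; auto. split.
  - apply good_enabled; auto. apply (Good_prefix _ _ s). rewrite <- app_assoc; auto.
  - apply IH. rewrite <- app_assoc; auto.
Qed.

Lemma fseq_good O sigma : occurrence_net O -> forall p, Good O p -> fseq O p sigma -> Good O (p ++ sigma).
Proof.
  intro Ho. induction sigma as [|e s IH]; simpl; intros p Hg Hf.
  - rewrite app_nil_r; auto.
  - destruct Hf as [Hen Hf]. replace (p ++ e :: s) with ((p ++ [e]) ++ s) by (rewrite <- app_assoc; reflexivity).
    apply IH; auto. apply good_step; auto.
Qed.

Definition dec {A : Type} : forall x y : A, {x = y} + {x <> y} :=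
  fun x y => excluded_middle_informative (x = y).

Lemma rt_cases {A} (R : A -> A -> Prop) x y : clos_refl_trans A R x y -> x = y \/ clos_trans A R x y.
Proof.
  induction 1 as [x y H|x|x y z _ [->|H1] _ [->|H2]]; auto using t_step.
  right; eapply t_trans; eauto.
Qed.

Lemma ple_cases O y e : ple O (inr y) (inr e) -> y = e \/ plt O (inr y) (inr e).
Proof. intro H. apply rt_cases in H. destruct H as [H|H]; [left; congruence|right; auto]. Qed.

Lemma Good_down O l e y : Good O l -> In e l -> ple O (inr y) (inr e) -> In y l.
Proof.
  intros [_ [G2 _]] He Hy. apply ple_cases in Hy. destruct Hy as [->|Hy]; auto.
  apply in_split in He. destruct He as [a [b ->]]. apply in_or_app; left. eapply G2; eauto.
Qed.

Lemma Good_snoc O p e : Good O p -> ~ In e p -> (forall y, plt O (inr y) (inr e) -> In y p) ->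
  (forall x y, In x (p ++ [e]) -> In y (p ++ [e]) -> ~ pconf O (inr x) (inr y)) -> Good O (p ++ [e]).
Proof.
  intros [G1 [G2 G3]] Hn Hd Hc. split; [|split]; auto.
  - apply NoDup_app; auto. constructor; auto. constructor.
    intros a Ha [->|[]]; auto.
  - intros a e0 b Hs y Hy. symmetry in Hs; apply split_snoc in Hs. destruct Hs as [[-> [-> ->]]|[b' [-> ->]]].
    + auto.
    + eapply G2; eauto.
Qed.

Lemma min_exists O : occurrence_net O -> forall R : list (pT O), R <> [] ->
  exists e, In e R /\ forall y, In y R -> ~ plt O (inr y) (inr e).
Proof.
  intros Ho R. induction R as [|x R IH]; intro Hne; [congruence|].
  destruct R as [|z R].
  - exists x. split; [left; auto|]. intros y [<-|[]]. apply plt_irr; auto.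
  - destruct IH as [m [Hm Hmin]]; [discriminate|].
    destruct (classic (plt O (inr x) (inr m))) as [Hxm|Hxm].
    + exists x. split; [left; auto|]. intros y [<-|Hy].
      * apply plt_irr; auto.
      * intro Hyx. apply (Hmin y Hy). eapply t_trans; eauto.
    + exists m. split; [right; auto|]. intros y [<-|Hy]; auto.
Qed.


Lemma build O (D : pT O -> Prop) : occurrence_net O ->
  (forall x y, D x -> D y -> ~ pconf O (inr x) (inr y)) ->
  (forall x y, D x -> plt O (inr y) (inr x) -> D y) ->
  forall n (R : list (pT O)) p, length R <= n -> Good O p ->
  (forall y, D y -> In y p \/ In y R) -> (forall y, In y R -> D y) -> (forall y, In y p -> D y) ->
  exists l, Good O l /\ forall y, D y -> In y l.
Proof.
  intros Ho Hc Hdown n. induction n as [|n IH]; intros R p Hlen Hg Hcov HR Hp.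
  - destruct R; [|simpl in Hlen; lia]. exists p. split; auto. intros y Hy; destruct (Hcov y Hy) as [?|[]]; auto.
  - destruct R as [|r R0].
    + exists p. split; auto. intros y Hy; destruct (Hcov y Hy) as [?|[]]; auto.
    + destruct (min_exists O Ho (r :: R0)) as [e [He Hmin]]; [discriminate|].
      assert (Hlt : length (remove dec e (r :: R0)) <= n).
      { pose proof (remove_length_lt dec (r :: R0) e He). simpl in *. lia. }
      assert (HR' : forall y, In y (remove dec e (r :: R0)) -> D y).
      { intros y Hy. apply in_remove in Hy. apply HR; tauto. }
      destruct (classic (In e p)) as [Hep|Hep].
      * apply (IH _ p Hlt Hg); auto. intros y Hy. destruct (Hcov y Hy) as [?|Hy']; auto.
        destruct (classic (y = e)) as [->|Hne]; auto. right; apply in_in_remove; auto.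
      * apply (IH _ (p ++ [e]) Hlt).
        -- apply Good_snoc; auto.
           ++ intros y Hy. assert (Dy : D y) by (eapply Hdown; eauto).
              destruct (Hcov y Dy) as [?|Hy']; auto. exfalso; exact (Hmin y Hy' Hy).
           ++ intros x y Hx Hy. apply Hc.
              ** rewrite in_app_iff in Hx; destruct Hx as [?|[<-|[]]]; auto.
              ** rewrite in_app_iff in Hy; destruct Hy as [?|[<-|[]]]; auto.
        -- intros y Hy. destruct (Hcov y Hy) as [?|Hy']; [left; apply in_or_app; auto|].
           destruct (classic (y = e)) as [->|Hne]; [left; apply in_or_app; simpl; auto|].
           right; apply in_in_remove; auto.
        -- auto.
        -- intros y Hy. rewrite in_app_iff in Hy; destruct Hy as [?|[<-|[]]]; auto.
Qed.

Lemma exists_good O t t' : occurrence_net O -> ~ pconf O (inr t) (inr t') ->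
  exists l, Good O l /\ In t l /\ In t' l.
Proof.
  intros Ho Hnc.
  set (D := fun y => ple O (inr y) (inr t) \/ ple O (inr y) (inr t')).
  destruct Ho as (Hpo & Hs & Hb & Hm & Hc & Hfin & Hirr) eqn:Hoo.
  destruct (Hfin t) as [lt Hlt]. destruct (Hfin t') as [lt' Hlt'].
  set (R0 := filter (fun y => if excluded_middle_informative (D y) then true else false) (lt ++ lt')).
  destruct (build O D Ho) with (n := length R0) (R := R0) (p := @nil (pT O)) as [l [Hg Hl]].
  - intros x y [Hx|Hx] [Hy|Hy] Hxy.
    + apply (Hirr (inr t)). eapply pconf_her; eauto.
    + apply Hnc. eapply pconf_her; eauto.
    + apply Hnc. apply pconf_sym. eapply pconf_her; eauto.
    + apply (Hirr (inr t')). eapply pconf_her; eauto.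
  - intros x y [Hx|Hx] Hy; [left|right]; unfold ple in *; eapply rt_trans; eauto; apply plt_ple; auto.
  - auto.
  - apply Good_nil.
  - intros y Hy. right. unfold R0. apply filter_In. split.
    + apply in_or_app. destruct Hy; auto.
    + destruct excluded_middle_informative; tauto.
  - intros y Hy. unfold R0 in Hy. apply filter_In in Hy. destruct Hy as [_ Hy].
    destruct excluded_middle_informative; [auto|discriminate].
  - intros y [].
  - exists l. split; auto. split; apply Hl; unfold D; [left|right]; apply rt_refl.
Qed.

Lemma mcount_pos {T : Type} (l : list T) t : 0 < mcount l t <-> In t l.
Proof.
  induction l as [|u l IH]; simpl; [split; [lia|tauto]|].
  destruct (classic (u = t)) as [->|n].
  - rewrite ind_T by auto. split; [auto|lia].
  - rewrite ind_F by auto. simpl. rewrite IH. split; [auto|intros [?|?]; [congruence|auto]].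
Qed.

Lemma state_good O sigma m : occurrence_net O -> cfires (C_of O) (cm (C_of O)) sigma m ->
  Good O sigma /\ m = Mk O sigma.
Proof.
  intros Ho H. unfold cfires in H; simpl in H. rewrite <- Mk_nil in H.
  apply fires_Mk in H. destruct H as [Hf ->]. split; [|reflexivity].
  apply (fseq_good O sigma Ho [] (Good_nil O) Hf).
Qed.

Lemma good_state O l : occurrence_net O -> Good O l -> cfires (C_of O) (cm (C_of O)) l (Mk O l).
Proof.
  intros Ho H. unfold cfires; simpl. rewrite <- Mk_nil.
  apply (Mk_fires O l []). apply good_fseq; auto.
Qed.

Lemma state_in O X t : occurrence_net O -> is_state (C_of O) X -> supp X t ->
  exists sigma, Good O sigma /\ In t sigma /\ forall t', supp X t' -> In t' sigma.
Proof.
  intros Ho [sigma [m [Hf HX]]] Ht. apply state_good in Hf; auto.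
  exists sigma. split; [tauto|]. unfold supp in *. rewrite HX, mcount_pos in Ht. split; auto.
  intros t' H; rewrite HX, mcount_pos in H; auto.
Qed.

Lemma pconf_cconf O t t' : occurrence_net O -> pconf O (inr t) (inr t') -> cconf (C_of O) t t'.
Proof.
  intros Ho Hc [X [HX [Ht Ht']]].
  destruct (state_in O X t Ho HX Ht) as [sigma [Hg [Hin Hall]]].
  specialize (Hall t' Ht').
  destruct Hc as [y [y' [Hy [Hy' Hc0]]]].
  pose proof (Good_down O sigma t y Hg Hin Hy) as Iy.
  pose proof (Good_down O sigma t' y' Hg Hall Hy') as Iy'.
  destruct Hg as [_ [_ G3]]. apply (G3 y y' Iy Iy').
  exists y, y'. split; [apply rt_refl|split; [apply rt_refl|auto]].
Qed.

Lemma cconf_pconf O t t' : occurrence_net O -> cconf (C_of O) t t' -> pconf O (inr t) (inr t').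
Proof.
  intros Ho H. apply NNPP. intro Hn. destruct (exists_good O t t' Ho Hn) as [l [Hg [Ht Ht']]].
  apply H. exists (mcount l). split; [|unfold supp; rewrite !mcount_pos; auto].
  exists l, (Mk O l). split; auto. apply good_state; auto.
Qed.

Lemma cprec_plt O t t' : cprec (C_of O) t t' <-> plt O (inr t) (inr t').
Proof.
  split.
  - intros [[s [H1 H2]]|[s [_ []]]]. destruct s as [[e|e|X] H]; simpl in *; try tauto.
    unfold C_pre, C_inh in *; simpl in *. subst; auto.
  - intro H. left. exists (pIn O t). simpl. unfold C_pre, C_inh, pIn; simpl. auto.
Qed.

Lemma cprec_star_ple O t t' : cprec_star (C_of O) t t' -> ple O (inr t) (inr t').
Proof.
  induction 1 as [x y H|x|x y z _ H1 _ H2].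
  - apply plt_ple, cprec_plt; auto.
  - apply rt_refl.
  - eapply rt_trans; eauto.
Qed.

Lemma clt_T O t y : clt (C_of O) (inr t) y -> exists s, y = inl s.
Proof.
  intro H. apply clos_trans_t1n in H. destruct H as [y H0|z y H0 H1].
  - destruct y as [s|t']; simpl in H0; [eauto|destruct H0].
  - destruct z as [s|t']; simpl in H0; [|destruct H0].
    destruct H1 as [y H2|w y H2 _];
    [destruct y as [s'|t']|destruct w as [s'|t']]; simpl in H2; try destruct H2;
    destruct s as [[e|e|X] Hs]; unfold C_post, C_pre in *; simpl in *; try tauto; eauto.
Qed.

Theorem mainTheorem11 (O : pnet) :
  occurrence_net O -> occurrence_causal_net (C_of O).
Proof.
  intro Ho.
  assert (Hpo : po_on (fun _ => True) (cprec_star (C_of O))).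
  { split; [|split].
    - intros; apply rt_refl.
    - intros x y z _ _ _ H1 H2; eapply rt_trans; eauto.
    - intros x y _ _ H1 H2. apply cprec_star_ple in H1, H2.
      destruct Ho as [[_ [_ Ha]] _]. specialize (Ha _ _ I I H1 H2). congruence. }
  assert (Hex : forall t, exists X, is_state (C_of O) X /\ supp X t).
  { intro t. destruct (exists_good O t t Ho (pconf_irr O Ho t)) as [l [Hg [Ht _]]].
    exists (mcount l). split; [|unfold supp; rewrite mcount_pos; auto].
    exists l, (Mk O l). split; auto. apply good_state; auto. }
  split; [split; [|split]|split; [|split; [|split]]].
  -
    split; [split|].
    + intros sigma m H s. apply state_good in H; auto. destruct H as [_ ->]. apply Mk_le1.
    + intro t. exists (pIn O t). simpl. unfold C_pre, pIn; simpl; auto.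
    + split; [|split; [|split; [|split; [|split; [|split; [|split]]]]]].
      * intros t t' H. destruct (clt_T O t _ H) as [s Hs]; discriminate.
      * intros t [s [H1 H2]]. destruct s as [[e|e|X] H]; unfold C_pre, C_inh in *; simpl in *; try tauto.
        subst. unfold C_pre, C_inh in H1, H2; simpl in H1, H2. subst. apply (plt_irr O Ho t H2).
      * intros t [s [_ []]].
      * intros s t H. destruct s as [[e|e|X] Hs]; unfold C_inh in H; simpl in H; try tauto.
        exists e. split.
        -- exists e. simpl. unfold C_pre; simpl; auto.
        -- intros t'. simpl. unfold C_pre; simpl; auto.
      * intros t t' H1 H2. apply cprec_plt in H1, H2. apply (plt_irr O Ho t).
        eapply t_trans; eauto.
      * intro t. destruct (proj1 (proj2 (proj2 (proj2 (proj2 (proj2 Ho))))) t) as [l Hl].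
        exists (map (pIn O) l). intros s [H|[]].
        destruct s as [[e|e|X] Hs]; unfold C_inh in H; simpl in H; try tauto.
        destruct Hs. apply (in_map (pIn O) l e). apply Hl, plt_ple; auto.
      * intros t t' H. apply cconf_pconf in H; auto.
        exists (pConf O t t' H). simpl. unfold C_pre, pConf; simpl; auto.
      * intros t t' Hn Hl. simpl in Hl. congruence.
  - intros X _. destruct Hpo as [H1 [H2 H3]]. split; [|split]; eauto.
  - exact Hex.
  - intros s t [].
  - simpl; auto.
  - exact Hpo.
  - intros t t' t'' H1 H2. apply pconf_cconf; auto. apply cconf_pconf in H1; auto.
    eapply pconf_her; eauto. apply rt_refl. apply cprec_star_ple; auto.
Qed.
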